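(* Let $V_1,\dots,V_{15}$ be the orbits of $L$ on $V(G_{E_8})$. Let $i\neq j$, $k,s\in V_i$ and $l,t\in V_j$. If $d(k,l)=d(s,t)$, then there exists $\sigma\in L$ with $\sigma(k)=s$ and $\sigma(l)=t$.
   Context: The $E_8$ root system $\Psi_{E_8}\subset\mathbb{R}^8$ consists of the 240 vectors $\pm e_i\pm e_j$ ($1\le i<j\le 8$) and all $x\in\{\pm1\}^8$ with $\prod_i x_i=1$. $G_{E_8}$ is the graph with vertices $v_x$, $x\in\Psi_{E_8}$, where $v_x=v_{-x}$, and $v_x\sim v_y$ iff $\langle x,y\rangle=0$. Let $I=\mathrm{diag}(1,1)$, $X=\begin{pmatrix}0&1\\1&0\end{pmatrix}$, $Z=\mathrm{diag}(1,-1)$, $Y=XZ$. For $M=M_1\otimes M_2\otimes M_3$ with $M_i\in\{I,X,Y,Z\}$, $\sigma_M:v_x\mapsto v_{Mx}$ is an automorphism of $G_{E_8}$ and $L=\{\sigma_M\}\cong\mathbb{Z}_2^6$; $L$ has 15 orbits on $V(G_{E_8})$, each of size 8. $d(a,b)$ denotes the graph distance in $G_{E_8}$ (length of a shortest path). *)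

(* Defs.v *)
From mathcomp Require Import all_boot all_order all_algebra.
Set Implicit Arguments. Unset Strict Implicit. Unset Printing Implicit Defensive.
Import Order.TTheory GRing.Theory Num.Theory.
Local Open Scope ring_scope.

(* Vectors of R^8 with integer coordinates (all E8 roots in the paper's
   normalisation have coordinates in {-1,0,1}). *)
Definition vec := 'cV[int]_8.

Definition dot (x y : vec) : int := \sum_(i < 8) x i 0 * y i 0.

Definition is_E8_root (x : vec) : bool :=
  [exists i : 'I_8, exists j : 'I_8,
     [&& (i < j)%N, x i 0 ^+ 2 == 1, x j 0 ^+ 2 == 1 &
         [forall k : 'I_8, (k != i) && (k != j) ==> (x k 0 == 0)]]]
  || ([forall k : 'I_8, x k 0 ^+ 2 == 1] && (\prod_(k < 8) x k 0 == 1)).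

(* Vertex v_x = v_{-x}: we represent the vertex by the canonical element of
   {x, -x} whose first nonzero coordinate is positive. *)
Definition first_nz (x : vec) : int :=
  head 0 [seq c <- [seq x i 0 | i <- enum 'I_8] | c != 0].

Definition vert (x : vec) : vec := if first_nz x < 0 then - x else x.

Definition is_vertex (v : vec) : bool := is_E8_root v && (vert v == v).

Definition adj (u w : vec) : bool :=
  [&& is_vertex u, is_vertex w & dot u w == 0].

Definition gdist (a b : vec) (n : nat) : Prop :=
  (exists p : seq vec, [/\ path adj a p, last a p = b & size p = n])
  /\ (forall p : seq vec, path adj a p -> last a p = b -> (n <= size p)%N).

Definition Imx : 'M[int]_2 := \matrix_(i < 2, j < 2) ((i == j)%:R).
Definition Xmx : 'M[int]_2 := \matrix_(i < 2, j < 2) ((i != j)%:R).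
Definition Zmx : 'M[int]_2 :=
  \matrix_(i < 2, j < 2) (if i == j then (if i == 0 :> nat then 1 else -1) else 0).
Definition Ymx : 'M[int]_2 := Xmx *m Zmx.

Definition pauli (a : 'I_4) : 'M[int]_2 :=
  match val a with 0 => Imx | 1 => Xmx | 2 => Ymx | _ => Zmx end.

(* Bit k of an index of 'I_8 (standard Kronecker ordering i = 4a+2b+c). *)
Definition bit (k : nat) (i : 'I_8) : 'I_2 := inord ((i %/ 2 ^ k) %% 2).

Definition kron3 (A B C : 'M[int]_2) : 'M[int]_8 :=
  \matrix_(i < 8, j < 8)
    (A (bit 2 i) (bit 2 j) * B (bit 1 i) (bit 1 j) * C (bit 0 i) (bit 0 j)).

Definition Lmat (m : 'I_4 * 'I_4 * 'I_4) : 'M[int]_8 :=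
  kron3 (pauli m.1.1) (pauli m.1.2) (pauli m.2).

Definition sigma (m : 'I_4 * 'I_4 * 'I_4) (v : vec) : vec := vert (Lmat m *m v).

Definition same_orbit (u w : vec) : Prop := exists m, sigma m u = w.

(* Main.v *)
Require Import Defs.
From mathcomp Require Import all_boot all_order all_algebra.
Set Implicit Arguments. Unset Strict Implicit. Unset Printing Implicit Defensive.
Import Order.TTheory GRing.Theory Num.Theory.
Local Open Scope ring_scope.
Definition pe (a x y : nat) : int :=
  match a, x, y with
  | 0, 0, 0 => 1 | 0, 1, 1 => 1
  | 1, 0, 1 => 1 | 1, 1, 0 => 1
  | 2, 0, 1 => -1 | 2, 1, 0 => 1
  | 3, 0, 0 => 1 | 3, 1, 1 => -1
  | _, _, _ => 0 end.
Definition sum8 (F : nat -> int) : int := foldr (fun i acc => F i + acc) 0 (iota 0 8).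
Definition prod8 (F : nat -> int) : int := foldr (fun i acc => F i * acc) 1 (iota 0 8).

Lemma sum8E (F : nat -> int) : \sum_(k < 8) F k = sum8 F.
Proof. by rewrite -(big_mkord xpredT) unlock. Qed.
Lemma prod8E (F : nat -> int) : \prod_(k < 8) F k = prod8 F.
Proof. by rewrite -(big_mkord xpredT) unlock. Qed.

Lemma pauliE (a : 'I_4) (x y : 'I_2) : pauli a x y = pe a x y.
Proof.
case: a => [[|[|[|[|a]]]] Ha] //; rewrite /pauli /=;
  case: x => [[|[|x]] Hx] //; case: y => [[|[|y]] Hy] //;
  rewrite /Imx /Xmx /Ymx /Zmx ?mxE //= ?big_ord_recl ?big_ord0 ?mxE //=.
Qed.
Definition bitn (k i : nat) : nat := ((i %/ 2 ^ k) %% 2)%N.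
Definition bitt (k i : nat) : nat := nth 0%N (nth [::] [:: [:: 0; 1; 0; 1; 0; 1; 0; 1];
  [:: 0; 0; 1; 1; 0; 0; 1; 1]; [:: 0; 0; 0; 0; 1; 1; 1; 1]]%N k) i.
Definition lmc (a b c i j : nat) : int :=
  pe a (bitt 2 i) (bitt 2 j) * pe b (bitt 1 i) (bitt 1 j) * pe c (bitt 0 i) (bitt 0 j).
Definition mulc (a b c : nat) (v : seq int) : seq int :=
  mkseq (fun i => sum8 (fun j => lmc a b c i j * v`_j)) 8.
Definition fnz (v : seq int) : int := head 0 [seq x <- [seq v`_i | i <- iota 0 8] | x != 0].
Definition vertc (v : seq int) : seq int := if fnz v < 0 then map -%R v else v.
Definition sigc (a b c : nat) (v : seq int) := vertc (mulc a b c v).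
Definition dotc (v w : seq int) : int := sum8 (fun i => v`_i * w`_i).
Definition isE8c (c : seq int) : bool :=
  has (fun i => has (fun j => [&& (i < j)%N, c`_i ^+ 2 == 1, c`_j ^+ 2 == 1 &
     all (fun k => (k != i) && (k != j) ==> (c`_k == 0)) (iota 0 8)]) (iota 0 8)) (iota 0 8)
  || (all (fun k => c`_k ^+ 2 == 1) (iota 0 8) && (prod8 (fun k => c`_k) == 1)).

Definition mk (c : seq int) : vec := \col_(i < 8) c`_i.
Lemma mkE c (i : 'I_8) j : mk c i j = c`_i.
Proof. by rewrite mxE. Qed.

Lemma bitE k (i : 'I_8) : (k <= 2)%N -> nat_of_ord (bit k i) = bitt k i.
Proof.
rewrite /bit inordK ?ltn_pmod //; case: k => [|[|[|]]] // _;
  by case: i => [[|[|[|[|[|[|[|[|i]]]]]]]] hi].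
Qed.

Lemma LmatE m (i j : 'I_8) : Lmat m i j = lmc m.1.1 m.1.2 m.2 i j.
Proof. by rewrite /Lmat /kron3 mxE !pauliE !bitE. Qed.

Lemma mulE m c : Lmat m *m mk c = mk (mulc m.1.1 m.1.2 m.2 c).
Proof.
apply/matrixP => i j; rewrite !mxE nth_mkseq //.
rewrite -(sum8E (fun j => lmc m.1.1 m.1.2 m.2 i j * c`_j)).
by apply: eq_bigr => k _; rewrite LmatE mkE.
Qed.

Lemma first_nzE c : first_nz (mk c) = fnz c.
Proof.
rewrite /first_nz /fnz -val_enum_ord -map_comp; congr (head _ (filter _ _)).
by apply: eq_map => i /=; rewrite mkE.
Qed.

Lemma nth_oppmap (c : seq int) i : (map -%R c)`_i = - c`_i.
Proof.
case: (ltnP i (size c)) => h; first by rewrite (nth_map 0).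
by rewrite !nth_default ?size_map // oppr0.
Qed.

Lemma vertE c : vert (mk c) = mk (vertc c).
Proof.
rewrite /vert /vertc first_nzE; case: ifP => _ //.
by apply/matrixP => i j; rewrite !mxE nth_oppmap.
Qed.

Lemma sigmaE m c : sigma m (mk c) = mk (sigc m.1.1 m.1.2 m.2 c).
Proof. by rewrite /sigma mulE vertE. Qed.

Lemma dotE c d : dot (mk c) (mk d) = dotc c d.
Proof.
rewrite /dot /dotc -(sum8E (fun i => c`_i * d`_i)).
by apply: eq_bigr => k _; rewrite !mkE.
Qed.

Lemma mk_inj c d : size c = 8%N -> size d = 8%N -> mk c = mk d -> c = d.
Proof.
move=> sc sd e; apply: (@eq_from_nth _ 0); first by rewrite sc sd.
move=> i; rewrite sc => hi.
by have := congr1 (fun M : vec => M (Ordinal hi) 0) e; rewrite !mkE.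
Qed.

Lemma size_vertc c : size (vertc c) = size c.
Proof. by rewrite /vertc; case: ifP => //; rewrite size_map. Qed.

Definition cv (v : vec) : seq int := mkseq (fun i => v (inord i) 0) 8.
Lemma cvE v : v = mk (cv v).
Proof.
apply/matrixP => i j; rewrite mkE nth_mkseq // inord_val.
by rewrite (ord1 j).
Qed.

Lemma isE8E c : is_E8_root (mk c) -> isE8c c.
Proof.
rewrite /is_E8_root /isE8c; case/orP => [/existsP [i /existsP [j]] | ].
  case/and4P => lij hi hj /forallP hk; apply/orP; left.
  apply/hasP; exists (val i); first by rewrite mem_iota /=.
  apply/hasP; exists (val j); first by rewrite mem_iota /=.
  rewrite !mkE in hi hj; apply/and4P; split => //.
  apply/allP => k; rewrite mem_iota /= => kb.
  have := hk (Ordinal kb); rewrite mkE -!val_eqE /=; exact.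
case/andP => /forallP hk hp; apply/orP; right; apply/andP; split.
  apply/allP => k; rewrite mem_iota /= => kb.
  by have := hk (Ordinal kb); rewrite mkE.
rewrite -prod8E; move: hp; congr (_ == _); apply: eq_bigr => k _; by rewrite mkE.
Qed.

Lemma entries v : is_E8_root v -> forall i : 'I_8, v i 0 \in [:: 0; 1; -1].
Proof.
have sq (x : int) : x ^+ 2 == 1 -> x \in [:: 0; 1; -1].
  by rewrite sqrf_eq1 !inE => ->; rewrite orbT.
move=> + i; case/orP => [/existsP [a /existsP [b]] | /andP [/forallP h _]]; last exact: sq.
case/and4P => _ ha hb /forallP hk.
case: (eqVneq i a) => [-> | nia]; first exact: sq.
case: (eqVneq i b) => [-> | nib]; first exact: sq.
by have := hk i; rewrite nia nib /= => /eqP ->; rewrite inE eqxx.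
Qed.

Fixpoint allc (n : nat) : seq (seq int) :=
  if n is n'.+1 then [seq x :: s | x <- [:: 0; 1; -1], s <- allc n'] else [:: [::]].

Lemma in_allc s : all (fun x => x \in [:: 0; 1; -1]) s -> s \in allc (size s).
Proof.
elim: s => [|x s IH]; first by rewrite inE.
move=> /andP [hx hs].
exact: (allpairs_f (fun x s => x :: s) hx (IH hs)).
Qed.

Lemma cv_allc v : is_E8_root v -> cv v \in allc 8.
Proof.
move=> h; have -> : 8%N = size (cv v) by rewrite size_mkseq.
apply: in_allc; apply/allP => x /mapP [i]; rewrite mem_iota /= => hi ->.
exact: entries.
Qed.

Definition tr (n : nat) : int := match n with 0 => Posz 0 | 1 => Posz 1 | _ => Negz 0 end.
Definition VLn : seq (seq nat) := [::
[:: 0; 0; 0; 0; 0; 0; 1; 2];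
[:: 0; 0; 0; 0; 0; 0; 1; 1];
[:: 0; 0; 0; 0; 0; 1; 2; 0];
[:: 0; 0; 0; 0; 0; 1; 0; 2];
[:: 0; 0; 0; 0; 0; 1; 0; 1];
[:: 0; 0; 0; 0; 0; 1; 1; 0];
[:: 0; 0; 0; 0; 1; 2; 0; 0];
[:: 0; 0; 0; 0; 1; 0; 2; 0];
[:: 0; 0; 0; 0; 1; 0; 0; 2];
[:: 0; 0; 0; 0; 1; 0; 0; 1];
[:: 0; 0; 0; 0; 1; 0; 1; 0];
[:: 0; 0; 0; 0; 1; 1; 0; 0];
[:: 0; 0; 0; 1; 2; 0; 0; 0];
[:: 0; 0; 0; 1; 0; 2; 0; 0];
[:: 0; 0; 0; 1; 0; 0; 2; 0];
[:: 0; 0; 0; 1; 0; 0; 0; 2];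
[:: 0; 0; 0; 1; 0; 0; 0; 1];
[:: 0; 0; 0; 1; 0; 0; 1; 0];
[:: 0; 0; 0; 1; 0; 1; 0; 0];
[:: 0; 0; 0; 1; 1; 0; 0; 0];
[:: 0; 0; 1; 2; 0; 0; 0; 0];
[:: 0; 0; 1; 0; 2; 0; 0; 0];
[:: 0; 0; 1; 0; 0; 2; 0; 0];
[:: 0; 0; 1; 0; 0; 0; 2; 0];
[:: 0; 0; 1; 0; 0; 0; 0; 2];
[:: 0; 0; 1; 0; 0; 0; 0; 1];
[:: 0; 0; 1; 0; 0; 0; 1; 0];
[:: 0; 0; 1; 0; 0; 1; 0; 0];
[:: 0; 0; 1; 0; 1; 0; 0; 0];
[:: 0; 0; 1; 1; 0; 0; 0; 0];
[:: 0; 1; 2; 0; 0; 0; 0; 0];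
[:: 0; 1; 0; 2; 0; 0; 0; 0];
[:: 0; 1; 0; 0; 2; 0; 0; 0];
[:: 0; 1; 0; 0; 0; 2; 0; 0];
[:: 0; 1; 0; 0; 0; 0; 2; 0];
[:: 0; 1; 0; 0; 0; 0; 0; 2];
[:: 0; 1; 0; 0; 0; 0; 0; 1];
[:: 0; 1; 0; 0; 0; 0; 1; 0];
[:: 0; 1; 0; 0; 0; 1; 0; 0];
[:: 0; 1; 0; 0; 1; 0; 0; 0];
[:: 0; 1; 0; 1; 0; 0; 0; 0];
[:: 0; 1; 1; 0; 0; 0; 0; 0];
[:: 1; 2; 2; 2; 2; 2; 2; 1];
[:: 1; 2; 2; 2; 2; 2; 1; 2];
[:: 1; 2; 2; 2; 2; 1; 2; 2];
[:: 1; 2; 2; 2; 2; 1; 1; 1];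
[:: 1; 2; 2; 2; 1; 2; 2; 2];
[:: 1; 2; 2; 2; 1; 2; 1; 1];
[:: 1; 2; 2; 2; 1; 1; 2; 1];
[:: 1; 2; 2; 2; 1; 1; 1; 2];
[:: 1; 2; 2; 1; 2; 2; 2; 2];
[:: 1; 2; 2; 1; 2; 2; 1; 1];
[:: 1; 2; 2; 1; 2; 1; 2; 1];
[:: 1; 2; 2; 1; 2; 1; 1; 2];
[:: 1; 2; 2; 1; 1; 2; 2; 1];
[:: 1; 2; 2; 1; 1; 2; 1; 2];
[:: 1; 2; 2; 1; 1; 1; 2; 2];
[:: 1; 2; 2; 1; 1; 1; 1; 1];
[:: 1; 2; 0; 0; 0; 0; 0; 0];
[:: 1; 2; 1; 2; 2; 2; 2; 2];
[:: 1; 2; 1; 2; 2; 2; 1; 1];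
[:: 1; 2; 1; 2; 2; 1; 2; 1];
[:: 1; 2; 1; 2; 2; 1; 1; 2];
[:: 1; 2; 1; 2; 1; 2; 2; 1];
[:: 1; 2; 1; 2; 1; 2; 1; 2];
[:: 1; 2; 1; 2; 1; 1; 2; 2];
[:: 1; 2; 1; 2; 1; 1; 1; 1];
[:: 1; 2; 1; 1; 2; 2; 2; 1];
[:: 1; 2; 1; 1; 2; 2; 1; 2];
[:: 1; 2; 1; 1; 2; 1; 2; 2];
[:: 1; 2; 1; 1; 2; 1; 1; 1];
[:: 1; 2; 1; 1; 1; 2; 2; 2];
[:: 1; 2; 1; 1; 1; 2; 1; 1];
[:: 1; 2; 1; 1; 1; 1; 2; 1];
[:: 1; 2; 1; 1; 1; 1; 1; 2];
[:: 1; 0; 2; 0; 0; 0; 0; 0];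
[:: 1; 0; 0; 2; 0; 0; 0; 0];
[:: 1; 0; 0; 0; 2; 0; 0; 0];
[:: 1; 0; 0; 0; 0; 2; 0; 0];
[:: 1; 0; 0; 0; 0; 0; 2; 0];
[:: 1; 0; 0; 0; 0; 0; 0; 2];
[:: 1; 0; 0; 0; 0; 0; 0; 1];
[:: 1; 0; 0; 0; 0; 0; 1; 0];
[:: 1; 0; 0; 0; 0; 1; 0; 0];
[:: 1; 0; 0; 0; 1; 0; 0; 0];
[:: 1; 0; 0; 1; 0; 0; 0; 0];
[:: 1; 0; 1; 0; 0; 0; 0; 0];
[:: 1; 1; 2; 2; 2; 2; 2; 2];
[:: 1; 1; 2; 2; 2; 2; 1; 1];
[:: 1; 1; 2; 2; 2; 1; 2; 1];
[:: 1; 1; 2; 2; 2; 1; 1; 2];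
[:: 1; 1; 2; 2; 1; 2; 2; 1];
[:: 1; 1; 2; 2; 1; 2; 1; 2];
[:: 1; 1; 2; 2; 1; 1; 2; 2];
[:: 1; 1; 2; 2; 1; 1; 1; 1];
[:: 1; 1; 2; 1; 2; 2; 2; 1];
[:: 1; 1; 2; 1; 2; 2; 1; 2];
[:: 1; 1; 2; 1; 2; 1; 2; 2];
[:: 1; 1; 2; 1; 2; 1; 1; 1];
[:: 1; 1; 2; 1; 1; 2; 2; 2];
[:: 1; 1; 2; 1; 1; 2; 1; 1];
[:: 1; 1; 2; 1; 1; 1; 2; 1];
[:: 1; 1; 2; 1; 1; 1; 1; 2];
[:: 1; 1; 0; 0; 0; 0; 0; 0];
[:: 1; 1; 1; 2; 2; 2; 2; 1];
[:: 1; 1; 1; 2; 2; 2; 1; 2];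
[:: 1; 1; 1; 2; 2; 1; 2; 2];
[:: 1; 1; 1; 2; 2; 1; 1; 1];
[:: 1; 1; 1; 2; 1; 2; 2; 2];
[:: 1; 1; 1; 2; 1; 2; 1; 1];
[:: 1; 1; 1; 2; 1; 1; 2; 1];
[:: 1; 1; 1; 2; 1; 1; 1; 2];
[:: 1; 1; 1; 1; 2; 2; 2; 2];
[:: 1; 1; 1; 1; 2; 2; 1; 1];
[:: 1; 1; 1; 1; 2; 1; 2; 1];
[:: 1; 1; 1; 1; 2; 1; 1; 2];
[:: 1; 1; 1; 1; 1; 2; 2; 1];
[:: 1; 1; 1; 1; 1; 2; 1; 2];
[:: 1; 1; 1; 1; 1; 1; 2; 2];
[:: 1; 1; 1; 1; 1; 1; 1; 1]]%N.
Definition VL : seq (seq int) := map (map tr) VLn.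
Definition VLi (i : nat) : seq int := nth [::] VL i.

Definition dig1 (n : nat) := (n %/ 16)%N.
Definition dig2 (n : nat) := ((n %/ 4) %% 4)%N.
Definition dig3 (n : nat) := (n %% 4)%N.

Definition Ttab : seq (seq nat) := Eval vm_compute in
  mkseq (fun m => mkseq (fun i => index (sigc (dig1 m) (dig2 m) (dig3 m) (VLi i)) VL) 120) 64.
Definition Tn (m i : nat) : nat := nth 0%N (nth [::] Ttab m) i.
Definition Otab : seq (seq bool) := Eval vm_compute in
  mkseq (fun x => mkseq (fun y => dotc (VLi x) (VLi y) == 0) 120) 120.
Definition On (x y : nat) : bool := nth false (nth [::] Otab x) y.
Definition pm (x y : nat) : nat := nth 0%N (nth [::] [:: [:: 0; 1; 2; 3]; [:: 1; 0; 3; 2]; [:: 2; 3; 0; 1]; [:: 3; 2; 1; 0]]%N x) y.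
Definition mulm_def (a b : nat) : nat :=
  (16 * pm (dig1 a) (dig1 b) + 4 * pm (dig2 a) (dig2 b) + pm (dig3 a) (dig3 b))%N.
Definition Mtab : seq (seq nat) := Eval vm_compute in
  mkseq (fun a => mkseq (fun b => mulm_def a b) 64) 64.
Definition mulm (a b : nat) : nat := nth 0%N (nth [::] Mtab a) b.
Definition Stabtab : seq (seq nat) := Eval vm_compute in
  mkseq (fun i => [seq n <- iota 0 64 | Tn n i == i]) 120.
Definition Orbtab : seq (seq nat) := Eval vm_compute in
  mkseq (fun j => undup [seq Tn p j | p <- iota 0 64]) 120.


Lemma C_VL : (size VL == 120%N) && uniq VL && all (fun c => size c == 8%N) VL.
Proof. by vm_compute. Qed.
Lemma C_enum : all (fun c => isE8c c && (vertc c == c) ==> (c \in VL)) (allc 8).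
Proof. Time by vm_compute. Qed.
Definition mxc (a b c : nat) : seq (seq int) := mkseq (fun i => mkseq (fun j => lmc a b c i j) 8) 8.
Definition mulM (M : seq (seq int)) (v : seq int) : seq int :=
  mkseq (fun i => sum8 (fun j => (nth [::] M i)`_j * v`_j)) 8.
Lemma eq_sum8 (F G : nat -> int) : (forall j, (j < 8)%N -> F j = G j) -> sum8 F = sum8 G.
Proof. by move=> h; rewrite /sum8 /= !h. Qed.
Lemma mulcM a b c v : mulc a b c v = mulM (mxc a b c) v.
Proof.
rewrite /mulc /mulM /mkseq; apply/eq_in_map => i; rewrite mem_iota /= => hi.
by apply: eq_sum8 => j hj; rewrite /mxc !nth_mkseq.
Qed.
Lemma C_sig : all (fun m => let M := mxc (dig1 m) (dig2 m) (dig3 m) in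
  all (fun i => (Tn m i < 120)%N &&
    (vertc (mulM M (VLi i)) == VLi (Tn m i))) (iota 0 120)) (iota 0 64).
Proof. Time by vm_compute. Qed.
Lemma C_dig : all (fun n => [&& 16 * dig1 n + 4 * dig2 n + dig3 n == n, dig1 n < 4 & size (nth [::] Ttab n) == 120])%N (iota 0 64).
Proof. by vm_compute. Qed.
Lemma C_inv : all (fun m => all (fun i => Tn m (Tn m i) == i) (iota 0 120)) (iota 0 64).
Proof. Time by vm_compute. Qed.
Definition Gens : seq nat := [:: 1; 3; 4; 12; 16; 48]%N.
Definition gd (s d : nat) : seq nat :=
  match d with 1 => [:: s] | 2 => [:: s; 3 * s] | 3 => [:: 3 * s] | _ => [::] end%N.
Definition decomp (a : nat) : seq nat := gd 16 (dig1 a) ++ gd 4 (dig2 a) ++ gd 1 (dig3 a).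
Lemma C_decomp : all (fun a => (foldr mulm 0%N (decomp a) == a) && all (fun g => g \in Gens) (decomp a)) (iota 0 64).
Proof. Time by vm_compute. Qed.
Lemma C_mulm : all (fun a => all (fun b => (mulm a b < 64)%N) (iota 0 64)) (iota 0 64).
Proof. Time by vm_compute. Qed.
Lemma C_m0 : all (fun b => mulm 0 b == b) (iota 0 64).
Proof. Time by vm_compute. Qed.
Lemma C_G : all (fun g => (g < 64)%N) Gens.
Proof. by vm_compute. Qed.
Lemma C_assoc : all (fun g => all (fun a => all (fun b => mulm (mulm g a) b == mulm g (mulm a b)) (iota 0 64)) (iota 0 64)) Gens.
Proof. Time by vm_compute. Qed.
Lemma C_compg : all (fun g => all (fun b =>
   (nth [::] Ttab (mulm g b) == map (fun y => Tn g y) (nth [::] Ttab b))) (iota 0 64)) Gens.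
Proof. Time by vm_compute. Qed.
Lemma C_orthg : all (fun a => all (fun x => map (fun ty => On (Tn a x) ty) (nth [::] Ttab a) == nth [::] Otab x) (iota 0 120)) Gens.
Proof. Time by vm_compute. Qed.
Lemma C_O : all (fun x => all (fun y => On x y == (dotc (VLi x) (VLi y) == 0)) (iota 0 120)) (iota 0 120).
Proof. Time by vm_compute. Qed.
Lemma C_stab : all (fun i => all (fun n => (n < 64)%N && (Tn n i == i)) (nth [::] Stabtab i)) (iota 0 120).
Proof. by vm_compute. Qed.
Lemma C_orb : all (fun j => all (fun p => Tn p j \in nth [::] Orbtab j) (iota 0 64)) (iota 0 120).
Proof. Time by vm_compute. Qed.
Lemma C_main : all (fun i => let Oi := nth [::] Otab i in let St := nth [::] Stabtab i in
   let Ob := nth [::] Orbtab i in all (fun j => (j \notin Ob) ==>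
   let S := map (fun n => Tn n j) St in let oij := nth false Oi j in
   all (fun t => (nth false Oi t == oij) ==> (t \in S)) (nth [::] Orbtab j)) (iota 0 120)) (iota 0 120).
Proof. Time by vm_compute. Qed.

Lemma C_trip : all (fun a => all (fun b => all (fun c =>
   let n := (16 * a + 4 * b + c)%N in [&& (n < 64)%N, dig1 n == a, dig2 n == b & dig3 n == c])
   (iota 0 4)) (iota 0 4)) (iota 0 4).
Proof. by vm_compute. Qed.
Lemma C_id : all (fun i => Tn 0 i == i) (iota 0 120).
Proof. by vm_compute. Qed.
Lemma C_orb2 : all (fun i => all (fun x => has (fun p => Tn p i == x) (iota 0 64)) (nth [::] Orbtab i)) (iota 0 120).
Proof. by vm_compute. Qed.

Lemma allI n (P : pred nat) : all P (iota 0 n) -> forall i, (i < n)%N -> P i.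
Proof. by move/allP => h i hi; apply: h; rewrite mem_iota. Qed.

Definition ofm (n : nat) : 'I_4 * 'I_4 * 'I_4 := (inord (dig1 n), inord (dig2 n), inord (dig3 n)).
Definition midx (m : 'I_4 * 'I_4 * 'I_4) : nat := (16 * m.1.1 + 4 * m.1.2 + m.2)%N.

Lemma midx_lt m : (midx m < 64)%N.
Proof.
case: m => [[a b] c]; have /and4P [h _ _ _] := allI (allI (allI C_trip (ltn_ord a)) (ltn_ord b)) (ltn_ord c).
exact: h.
Qed.

Lemma ofm_midx m : ofm (midx m) = m.
Proof.
case: m => [[a b] c].
have /and4P [_ /eqP h1 /eqP h2 /eqP h3] := allI (allI (allI C_trip (ltn_ord a)) (ltn_ord b)) (ltn_ord c).
by rewrite /ofm /midx /= h1 h2 h3 !inord_val.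
Qed.

Lemma sigma_n n i : (n < 64)%N -> (i < 120)%N ->
  sigma (ofm n) (mk (VLi i)) = mk (VLi (Tn n i)) /\ (Tn n i < 120)%N.
Proof.
move=> hn hi; have /and3P [_ h1 _] := allI C_dig hn.
have /andP [hlt /eqP hs] := allI (allI C_sig hn) hi.
split => //; rewrite sigmaE /ofm /= !inordK ?ltn_pmod //; by rewrite /sigc mulcM hs.
Qed.

Lemma Tlt m i : (m < 64)%N -> (i < 120)%N -> (Tn m i < 120)%N.
Proof. by move=> hm hi; case: (sigma_n hm hi). Qed.

Lemma Tinv m i : (m < 64)%N -> (i < 120)%N -> Tn m (Tn m i) = i.
Proof. by move=> hm hi; apply/eqP; exact: (allI (allI C_inv hm) hi). Qed.

Lemma Tid y : (y < 120)%N -> Tn 0 y = y.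
Proof. by move=> hy; apply/eqP; exact: (allI C_id hy). Qed.

Lemma compg g b x : g \in Gens -> (b < 64)%N -> (x < 120)%N -> Tn (mulm g b) x = Tn g (Tn b x).
Proof.
move=> hg hb hx; have /eqP he := allI (allP C_compg g hg) hb.
rewrite /Tn he (nth_map 0%N) //.
by have /and3P [_ _ /eqP ->] := allI C_dig hb.
Qed.

Lemma orthg g x y : g \in Gens -> (x < 120)%N -> (y < 120)%N -> On (Tn g x) (Tn g y) = On x y.
Proof.
move=> hg hx hy; have /eqP he := allI (allP C_orthg g hg) hx.
rewrite /On -he (nth_map 0%N) //.
have hgl : (g < 64)%N := allP C_G g hg.
by have /and3P [_ _ /eqP ->] := allI C_dig hgl.
Qed.

Lemma decomp_ind l : all (fun g => g \in Gens) l ->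
  let a := foldr mulm 0%N l in (a < 64)%N /\
  (forall b x, (b < 64)%N -> (x < 120)%N -> Tn (mulm a b) x = Tn a (Tn b x)) /\
  (forall x y, (x < 120)%N -> (y < 120)%N -> On (Tn a x) (Tn a y) = On x y).
Proof.
elim: l => [|g l IH].
  move=> _ /=; split => //; split.
    by move=> b x hb hx; rewrite (eqP (allI C_m0 hb)) Tid // Tlt.
  by move=> x y hx hy; rewrite !Tid.
move=> /= /andP [hg hl]; have [ha [hc ho]] := IH hl.
move: ha hc ho; set a := foldr mulm 0%N l => ha hc ho.
have hgl : (g < 64)%N := allP C_G g hg.
have hm : (mulm g a < 64)%N := allI (allI C_mulm hgl) ha.
split => //; split.
  move=> b x hb hx.
  rewrite (eqP (allI (allI (allP C_assoc g hg) ha) hb)).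
  have hab : (mulm a b < 64)%N := allI (allI C_mulm ha) hb.
  have hbx : (Tn b x < 120)%N := Tlt hb hx.
  by rewrite compg // hc // compg.
move=> x y hx hy.
by rewrite !compg // orthg ?Tlt // ho.
Qed.

Lemma Tcomp a b x : (a < 64)%N -> (b < 64)%N -> (x < 120)%N ->
  (mulm a b < 64)%N /\ Tn (mulm a b) x = Tn a (Tn b x).
Proof.
move=> ha hb hx; split; first exact: (allI (allI C_mulm ha) hb).
have /andP [/eqP hd hl] := allI C_decomp ha.
have [_ [hc _]] := decomp_ind hl; move: hc; rewrite hd; exact.
Qed.

Lemma Torth a x y : (a < 64)%N -> (x < 120)%N -> (y < 120)%N ->
  On (Tn a x) (Tn a y) = On x y.
Proof.
move=> ha hx hy.
have /andP [/eqP hd hl] := allI C_decomp ha.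
have [_ [_ ho]] := decomp_ind hl; move: ho; rewrite hd; exact.
Qed.

Lemma VL_inj x y : (x < 120)%N -> (y < 120)%N -> mk (VLi x) = mk (VLi y) -> x = y.
Proof.
move=> hx hy e; have /andP [/andP [/eqP hs hu] /allP hsz] := C_VL.
have sx : size (VLi x) = 8%N by apply/eqP/hsz; rewrite mem_nth // hs.
have sy : size (VLi y) = 8%N by apply/eqP/hsz; rewrite mem_nth // hs.
have := mk_inj sx sy e; rewrite /VLi => /eqP; rewrite nth_uniq ?hs //; by move/eqP.
Qed.

Lemma vertex_idx v : is_vertex v -> exists2 i, (i < 120)%N & v = mk (VLi i).
Proof.
case/andP => hr hv; have hvc := cvE v; have cin := cv_allc hr.
rewrite hvc in hr hv; have e8 := isE8E hr.
have sc : size (cv v) = 8%N by rewrite size_mkseq.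
have hvv : vertc (cv v) == cv v.
  move: hv; rewrite vertE => /eqP /mk_inj -> //; by rewrite size_vertc.
have inVL : cv v \in VL by have := allP C_enum _ cin; rewrite e8 hvv; apply.
have /andP [/andP [/eqP hs _] _] := C_VL.
exists (index (cv v) VL); first by rewrite -hs index_mem.
by rewrite /VLi nth_index.
Qed.


Lemma gd1 u w n : is_vertex u -> is_vertex w -> u <> w -> gdist u w n ->
  (n == 1%N) = (dot u w == 0).
Proof.
move=> vu vw nuw [[p [pp lp sp]] hmin]; apply/idP/idP.
  move/eqP => n1; rewrite n1 in sp; case: p pp lp sp => [|x [|y p]] //= /andP [hadj _] <- _.
  by case/and3P: hadj.
move=> hd; have h1 : (n <= 1)%N by apply: (hmin [:: w]) => //=; rewrite /adj vu vw hd.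
case: n h1 sp hmin => [|[|]] //; case: p pp lp => // _ /= e _ _; by case: nuw.
Qed.

Theorem lemma3p6 (k s l t : vec) :
  is_vertex k -> is_vertex s -> is_vertex l -> is_vertex t ->
  same_orbit k s -> same_orbit l t -> ~ same_orbit k l ->
  (exists n : nat, gdist k l n /\ gdist s t n) ->
  exists m : 'I_4 * 'I_4 * 'I_4, sigma m k = s /\ sigma m l = t.
Proof.
move=> vk vs vl vt [a ha] [b hb] nso [n [gkl gst]].
have [i hi ek] := vertex_idx vk; have [j hj el] := vertex_idx vl.
subst k l.
have hA := midx_lt a; have hB := midx_lt b.
set A := midx a in hA; set B := midx b in hB.
have [sa hAi] := sigma_n hA hi; have [sb hBj] := sigma_n hB hj.
rewrite -(ofm_midx a) -/A sa in ha; rewrite -(ofm_midx b) -/B sb in hb.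
subst s t.
have so p x : (p < 64)%N -> Tn p i = x -> same_orbit (mk (VLi i)) (mk (VLi x)).
  by move=> hp <-; exists (ofm p); case: (sigma_n hp hi).
have nkl : mk (VLi i) <> mk (VLi j).
  move=> e; apply: nso; rewrite -e; apply: (so 0%N) => //; exact/eqP/(allI C_id hi).
have nst : mk (VLi (Tn A i)) <> mk (VLi (Tn B j)).
  move/(VL_inj hAi hBj) => e; apply: nso; have [hm hc] := Tcomp hB hA hi.
  apply: (so _ _ hm); by rewrite hc e Tinv.
have hO x y : (x < 120)%N -> (y < 120)%N -> (dot (mk (VLi x)) (mk (VLi y)) == 0) = On x y.
  by move=> hx hy; rewrite dotE; apply/esym/eqP; exact: (allI (allI C_O hx) hy).
have eO : On i j = On (Tn A i) (Tn B j).
  by rewrite -hO // -hO // -(gd1 vk vl nkl gkl) (gd1 vs vt nst gst).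
have [hP hPj] := Tcomp hA hB hj.
have eO2 : On i j = On i (Tn (mulm A B) j) by rewrite eO -(Torth hA) ?Tlt // Tinv // hPj.
have hnot : j \notin nth [::] Orbtab i.
  apply/negP => hin; apply: nso; have /hasP [p] := allP (allI C_orb2 hi) _ hin.
  rewrite mem_iota /= => hp /eqP; exact: so.
have hm := allI (allI C_main hi) hj; rewrite hnot /= in hm.
have hx : On i (Tn (mulm A B) j) == On i j by rewrite -eO2.
have := allP hm _ (allI (allI C_orb hj) hP); move/implyP/(_ hx).
case/mapP => nn hnn hnnj.
have /andP [hn /eqP hni] := allP (allI C_stab hi) _ hnn.
have [hAn hc] := Tcomp hA hn hi.
exists (ofm (mulm A nn)); split.
  by case: (sigma_n hAn hi) => ->; rewrite hc hni.
case: (sigma_n hAn hj) => ->; have [_ ->] := Tcomp hA hn hj.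
by rewrite -hnnj hPj Tinv // Tlt.
Qed.
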